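(* Let $\lambda,\nu$ be partitions and $k,\ell,m_1$ nonnegative integers with $\ell+m_1\le k$, and set $m_2=k-\ell-m_1$. Then the set of partitions $\mu$ such that $(\lambda,\mu,\nu)$ is an $sp$-bumping sequence with $|\lambda/\mu|=\ell$ and $|\nu/\mu|=k-\ell$ is in bijection with the set of pairs of partitions $(\mu^\circ,\mu^-)$ such that $(\lambda,\mu^\circ,\mu^-,\nu)$ is an $spo$-bumping sequence with $|\mu^\circ/\lambda|=m_1$, $|\mu^\circ/\mu^-|=\ell$ and $|\nu/\mu^-|=m_2$.
   Context: Partitions are identified with Young diagrams (English convention, rows numbered from the top, columns from the left); $\lambda_1$ is the length of the first row; $\mu\subseteq\lambda$ means $\mu_i\le\lambda_i$ for all $i$, $|\lambda/\mu|=|\lambda|-|\mu|$, and $\lambda/\mu$ is a horizontal strip if no two boxes of $\lambda/\mu$ lie in the same column. An $sp$-bumping sequence is a triple $(\lambda,\mu,\nu)$ of partitions with $\mu\subseteq\lambda$, $\mu\subseteq\nu$, and $\lambda/\mu$, $\nu/\mu$ horizontal strips. An $spo$-bumping sequence is a quadruple $(\lambda,\mu^\circ,\mu^-,\nu)$ of partitions with $\lambda\subseteq\mu^\circ$, $\mu^-\subseteq\mu^\circ$, $\mu^-\subseteq\nu$ such that: (1) $\mu^\circ/\lambda$, $\mu^\circ/\mu^-$ and $\nu/\mu^-$ are horizontal strips; (2) if $\lambda_1\neq\mu^\circ_1$ then $\mu^\circ_1=\mu^-_1$; (3) if $\nu/\mu^-$ and $\mu^\circ/\lambda$ are both nonempty,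 the leftmost box of $\nu/\mu^-$ lies in a column strictly to the right of the rightmost box of $\mu^\circ/\lambda$. *)

(* Defs.v *)
From mathcomp Require Import ssreflect ssrfun ssrbool eqtype ssrnat seq path.
Set Implicit Arguments. Unset Strict Implicit. Unset Printing Implicit Defensive.

Definition is_partition (la : seq nat) : bool :=
  sorted geq la && all (fun x => 0 < x) la.

(* row i (0-indexed), column j (1-indexed) *)
Definition part (la : seq nat) (i : nat) : nat := nth 0 la i.

Definition contained (mu la : seq nat) : Prop :=
  forall i, part mu i <= part la i.

Definition psize (la : seq nat) : nat := sumn la.
Definition skew_size (la mu : seq nat) : nat := psize la - psize mu.

Definition in_skew (la mu : seq nat) (i j : nat) : Prop :=
  part mu i < j <= part la i.

Definition horizontal_strip (la mu : seq nat) : Prop :=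
  contained mu la /\
  forall i i' j, in_skew la mu i j -> in_skew la mu i' j -> i = i'.

Definition sp_bumping (la mu nu : seq nat) : Prop :=
  contained mu la /\ contained mu nu /\
  horizontal_strip la mu /\ horizontal_strip nu mu.

Definition spo_bumping (la muo mum nu : seq nat) : Prop :=
  contained la muo /\ contained mum muo /\ contained mum nu /\
      horizontal_strip muo la /\ horizontal_strip muo mum /\
      horizontal_strip nu mum /\
      (part la 0 <> part muo 0 -> part muo 0 = part mum 0) /\
      (* (3): if both nonempty, the leftmost box of nu/mum is strictly right
         of the rightmost box of muo/la; equivalently every box of nu/mum is
         strictly right of every box of muo/la *)
      (forall i j i' j', in_skew nu mum i j -> in_skew muo la i' j' -> j' < j).

(* Main.v *)
Require Import Defs.
From mathcomp Require Import ssreflect ssrfun ssrbool eqtype ssrnat seq path.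
From mathcomp Require Import bigop zify.
From Stdlib Require Import ProofIrrelevance.
Set Implicit Arguments. Unset Strict Implicit. Unset Printing Implicit Defensive.
Definition dec (f : nat -> nat) := forall i, f i.+1 <= f i.
Definition strip (a b : nat -> nat) := forall i, b i <= a i /\ a i.+1 <= b i.

Lemma dec_mono f : dec f -> forall i j, i <= j -> f j <= f i.
Proof.
move=> df i j /subnK <-; elim: (j - i) => [|d IH] //=.
by rewrite addSn; apply: leq_trans (df _) IH.
Qed.

Lemma strip_decl a b : strip a b -> dec a.
Proof. by move=> h i; have [h1 _] := h i; have [_ h2] := h i; apply: leq_trans h2 h1. Qed.

Lemma strip_decr a b : strip a b -> dec b.
Proof. by move=> h i; have [h1 _] := h i.+1; have [_ h2] := h i; apply: leq_trans h1 h2. Qed.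

Lemma sum0 a b F : (forall i, a <= i < b -> F i = 0) -> \sum_(a <= i < b) F i = 0.
Proof.
move=> h; transitivity (\sum_(a <= i < b) 0); first by apply: eq_big_nat.
by rewrite big1.
Qed.

Lemma sum_le a b F G : (forall i, a <= i < b -> F i <= G i) ->
  \sum_(a <= i < b) F i <= \sum_(a <= i < b) G i.
Proof.
move=> h; rewrite [X in X <= _]big_nat_cond [X in _ <= X]big_nat_cond.
by apply: leq_sum => i /andP [hi _]; apply: h.
Qed.

Lemma sum_eq a b F G : (forall i, a <= i < b -> F i = G i) ->
  \sum_(a <= i < b) F i = \sum_(a <= i < b) G i.
Proof. exact: eq_big_nat. Qed.

Lemma sumD a b F G : \sum_(a <= i < b) (F i + G i) =
  \sum_(a <= i < b) F i + \sum_(a <= i < b) G i.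
Proof. by rewrite big_split. Qed.

Lemma part_dflt x i : size x <= i -> part x i = 0.
Proof. by move=> h; rewrite /part nth_default. Qed.

Lemma partP x : is_partition x ->
  dec (part x) /\ (forall i, (i < size x) = (0 < part x i)).
Proof.
case/andP=> /(sortedP 0) hs /(all_nthP 0) hp; split.
  move=> i; case: (ltnP i.+1 (size x)) => h; first by apply: hs.
  by rewrite part_dflt.
move=> i; case: (ltnP i (size x)) => h; first by rewrite hp.
by rewrite part_dflt.
Qed.

Lemma part_eq x y : is_partition x -> is_partition y ->
  (forall i, part x i = part y i) -> x = y.
Proof.
move=> px py h; have [_ sx] := partP px; have [_ sy] := partP py.
have es : size x = size y.
  apply/eqP; rewrite eqn_leq; apply/andP; split; rewrite leqNgt; apply/negP => hl.
  - by move: hl; rewrite sx h part_dflt.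
  - by move: hl; rewrite sy -h part_dflt.
by apply: (eq_from_nth (x0 := 0)) => // i _; apply: h.
Qed.

Definition mkp (f : nat -> nat) (N : nat) :=
  mkseq f (find (fun i => f i == 0) (iota 0 N)).

Lemma mkpP f N : dec f -> f N = 0 ->
  [/\ is_partition (mkp f N), forall i, part (mkp f N) i = f i & size (mkp f N) <= N].
Proof.
move=> df fN.
rewrite /mkp; set n := find (fun i => f i == 0) (iota 0 N).
have hn : n <= N by rewrite -(size_iota 0 N) find_size.
have hlt : forall i, i < n -> 0 < f i.
  move=> i hi; have := before_find 0 hi.
  rewrite nth_iota ?add0n; last by apply: leq_trans hi hn.
  by rewrite lt0n => ->.
have hge : forall i, n <= i -> f i = 0.
  move=> i hi; case: (ltnP n N) => h.
    have hh : has (fun i => f i == 0) (iota 0 N) by rewrite has_find size_iota -/n.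
    have := nth_find 0 hh; rewrite -/n nth_iota // add0n => /eqP h0.
    have : f i <= f n by apply: dec_mono.
    by rewrite h0 leqn0 => /eqP.
  have : f i <= f N by apply: dec_mono => //; apply: leq_trans h hi.
  by rewrite fN leqn0 => /eqP.
have hp : forall i, part (mkp f N) i = f i.
  move=> i; rewrite /part /mkp -/n; case: (ltnP i n) => h.
    by rewrite nth_mkseq.
  by rewrite nth_default ?size_mkseq // hge.
split => //; last by rewrite size_mkseq.
apply/andP; split.
  apply/(sortedP 0) => i hi; rewrite /geq.
  have := hp i; have := hp i.+1; rewrite /part => -> ->; exact: df.
apply/(all_nthP 0) => i; rewrite size_mkseq => hi.
by have := hp i; rewrite /part => ->; apply: hlt.
Qed.

Lemma hsP a b : is_partition a -> is_partition b ->
  horizontal_strip a b <-> strip (part a) (part b).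
Proof.
move=> pa pb; have [da _] := partP pa; have [db _] := partP pb.
split.
  case=> hc hs i; split; first by apply: hc.
  rewrite leqNgt; apply/negP => hlt.
  have H1 : in_skew a b i (part a i.+1) by rewrite /in_skew hlt da.
  have H2 : in_skew a b i.+1 (part a i.+1).
    by rewrite /in_skew leqnn andbT; apply: leq_ltn_trans (db i) hlt.
  by have := hs _ _ _ H1 H2; lia.
move=> h; split; first by move=> i; have [] := h i.
move=> i i' j; rewrite /in_skew => /andP [h1 h2] /andP [h3 h4].
case: (ltngtP i i') => // hii.
  have [_ h5] := h i; have := dec_mono da hii.
  move=> h6; have : j <= part b i by apply: leq_trans h4 (leq_trans h6 h5).
  by rewrite leqNgt h1.
have [_ h5] := h i'; have := dec_mono da hii.
move=> h6; have : j <= part b i' by apply: leq_trans h2 (leq_trans h6 h5).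
by rewrite leqNgt h3.
Qed.

Lemma psizeE x N : size x <= N -> psize x = \sum_(0 <= i < N) part x i.
Proof.
move=> h; rewrite /psize sumnE (big_nth 0) (@big_cat_nat _ _ _ (size x) 0 N _ _ (leq0n _) h) /=.
by rewrite [X in _ + X]sum0 ?addn0 // => i /andP [hi _]; rewrite part_dflt.
Qed.

Definition Ssum (n u : nat -> nat) N a := \sum_(a <= j < N) (n j - u j).
Definition mmf n u N m1 i := u i + minn (n i - u i) (m1 - Ssum n u N i.+1).
Definition mof (l n u : nat -> nat) N m1 i := maxn (l i) (mmf n u N m1 i) +
  (if i is i'.+1 then minn (l i') (mmf n u N m1 i') - u i' else 0).
Definition gf (l mo mm : nat -> nat) i :=
  minn (mm i) (l i) - (mo i.+1 - maxn (l i.+1) (mm i.+1)).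

Lemma Ssum_lt n u N a : a < N -> Ssum n u N a = n a - u a + Ssum n u N a.+1.
Proof. by move=> h; rewrite /Ssum big_ltn. Qed.

Lemma Ssum_mono n u N a b : a <= b -> Ssum n u N b <= Ssum n u N a.
Proof.
move=> hab; rewrite /Ssum; case: (leqP b N) => hb.
  by rewrite (@big_cat_nat _ _ _ b a N) //= leq_addl.
by rewrite (@big_geq _ _ _ b N) // ltnW.
Qed.

Lemma G_le n u N m1 i : u i <= n i -> u i <= mmf n u N m1 i <= n i.
Proof. rewrite /mmf; lia. Qed.

Lemma G1 n u N m1 i r : (forall j, N <= j -> n j = 0) ->
  mmf n u N m1 i < n i -> r < i -> mmf n u N m1 r = u r.
Proof.
move=> hz; rewrite /mmf => hi hri.
have iN : i < N by rewrite ltnNge; apply/negP => /hz h; move: hi; rewrite h.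
have := Ssum_lt n u iN; have := Ssum_mono n u N hri.
move: hi; set A := Ssum n u N i.+1; set B := Ssum n u N r.+1; set C := Ssum n u N i.
lia.
Qed.

Lemma G_tot n u N m1 a :
  \sum_(a <= i < N) (mmf n u N m1 i - u i) = minn m1 (Ssum n u N a).
Proof.
move e: (N - a) => d; elim: d a e => [|d IH] a e.
  by rewrite big_geq ?/Ssum ?big_geq ?minn0 //; lia.
have aN : a < N by lia.
rewrite big_ltn // IH; last by lia.
rewrite (Ssum_lt n u aN) /mmf; lia.
Qed.

Lemma Uniq n u mm N m1 : dec n -> strip n u -> (forall i, u i <= mm i <= n i) ->
  (forall i i', mm i < n i -> u i' < mm i' -> mm i' <= mm i) ->
  \sum_(0 <= j < N) (mm j - u j) = m1 -> (forall j, N <= j -> n j = 0) ->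
  forall i, mmf n u N m1 i = mm i.
Proof.
move=> dn sn hb hsp htot hz.
have C : forall i i', i < i' -> u i < mm i -> mm i' = n i'.
  move=> i i' hii hu; have := hb i'; have := hb i; have [_ h1] := sn i.
  have := dec_mono dn hii; case: (ltnP (mm i') (n i')) => hlt; last by lia.
  by have := hsp _ _ hlt hu; lia.
move=> i; case: (ltnP i N) => iN; last first.
  by have := hz _ iN; have := hb i; rewrite /mmf; lia.
have E : \sum_(0 <= j < N) (mm j - u j) = \sum_(0 <= j < i) (mm j - u j) +
   ((mm i - u i) + \sum_(i.+1 <= j < N) (mm j - u j)).
  by rewrite (@big_cat_nat _ _ _ i 0 N) ?(@big_ltn _ _ _ i N) //; exact: ltnW.
have hB : \sum_(i.+1 <= j < N) (mm j - u j) <= Ssum n u N i.+1.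
  by apply: sum_le => j _; have := hb j; lia.
have hB2 : u i < mm i -> \sum_(i.+1 <= j < N) (mm j - u j) = Ssum n u N i.+1.
  by move=> hu; rewrite /Ssum; apply: eq_big_nat => j /andP [hj _]; rewrite (C i j).
have hA : mm i < n i -> \sum_(0 <= j < i) (mm j - u j) = 0.
  move=> hm; apply: sum0 => j /andP [_ hj]; have := hb j.
  case: (ltnP (u j) (mm j)) => hu; last by lia.
  by have := C _ _ hj hu; lia.
have := hb i; rewrite /mmf; move: E hA hB hB2 htot.
set X := \sum_(0 <= j < N) _; set Y := \sum_(0 <= j < i) _; set Z := \sum_(i.+1 <= j < N) _.
lia.
Qed.

Lemma F_strip_n n u N m1 : strip n u -> strip n (mmf n u N m1).
Proof.
move=> sn i; have [h1 h2] := sn i; have := G_le N m1 h1; split; first by lia.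
by apply: leq_trans h2 _; lia.
Qed.

Lemma F_strips l n u N m1 : strip l u -> strip n u ->
  strip (mof l n u N m1) (mmf n u N m1) /\ strip (mof l n u N m1) l.
Proof.
move=> sl sn; have sm := F_strip_n N m1 sn.
split=> i; (split; first by case: i => [|i]; rewrite /mof; lia);
 rewrite /mof; have [h1 h2] := sl i; have [h3 h4] := sn i; have [h5 h6] := sm i.+1;
 have := G_le N m1 h3; lia.
Qed.

Lemma F_zero l n u N m1 i : strip l u -> strip n u ->
  (forall j, N.-1 <= j -> l j = 0 /\ n j = 0) -> N <= i ->
  mof l n u N m1 i = 0 /\ mmf n u N m1 i = 0.
Proof.
move=> sl sn hz hi; have sm := F_strip_n N m1 sn.
have [l0 n0] := hz i (leq_trans (leq_pred _) hi).
have [h5 _] := sm i; have [h1 _] := sl i.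
case: i hi l0 n0 h5 h1 => [|i] hi l0 n0 h5 h1; rewrite /mof; first by lia.
have [l1 _] := hz i ltac:(lia). lia.
Qed.

Lemma F_cond2 l n u N m1 : l 0 <> mof l n u N m1 0 -> mof l n u N m1 0 = mmf n u N m1 0.
Proof. rewrite /mof; lia. Qed.

Lemma F_cond3 l n u N m1 : strip l u -> strip n u -> (forall j, N <= j -> n j = 0) ->
  forall i i', mmf n u N m1 i < n i -> l i' < mof l n u N m1 i' ->
  mof l n u N m1 i' <= mmf n u N m1 i.
Proof.
move=> sl sn hz i i' hi hi'.
have [sm _] := F_strips N m1 sl sn.
have dm := strip_decr (F_strip_n N m1 sn).
case: (ltngtP i' i) => hii.
- have e1 := G1 hz hi hii; have [h1 _] := sl i'.
  move: hi'; rewrite /mof e1; case: i' hii e1 h1 => [|r] hii e1 h1; first by lia.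
  rewrite (G1 hz hi (ltnW hii)); lia.
- case: i' hii hi' => [//|r] hii hi'.
  have [_ h] := sm r; apply: leq_trans h _; exact: dec_mono.
- subst i'; move: hi'; rewrite /mof; case: i hi => [|r] hi; first by lia.
  rewrite (G1 hz hi (ltnSn r)); lia.
Qed.

Lemma GF l n u N m1 i : strip l u -> strip n u ->
  gf l (mof l n u N m1) (mmf n u N m1) i = u i.
Proof.
move=> sl sn; rewrite /gf /mof; have [h1 _] := sl i; have [h3 _] := sn i.
have := G_le N m1 h3; lia.
Qed.

Lemma sum_rows a b F G H K : (forall i, a <= i < b -> F i + G i = H i + K i) ->
  \sum_(a <= i < b) F i + \sum_(a <= i < b) G i =
  \sum_(a <= i < b) H i + \sum_(a <= i < b) K i.
Proof. by move=> h; rewrite -!sumD; apply: eq_big_nat. Qed.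

Lemma F_sum_mm n u N m1 : strip n u -> m1 <= Ssum n u N 0 ->
  \sum_(0 <= i < N) mmf n u N m1 i = \sum_(0 <= i < N) u i + m1.
Proof.
move=> sn hm; have e := G_tot n u N m1 0; rewrite (minn_idPl hm) in e.
have : \sum_(0 <= i < N) mmf n u N m1 i + \sum_(0 <= i < N) 0 =
  \sum_(0 <= i < N) u i + \sum_(0 <= i < N) (mmf n u N m1 i - u i).
  by apply: sum_rows => i _; have [h _] := sn i; have := G_le N m1 h; lia.
rewrite (@sum0 0 N (fun _ => 0)) // addn0 e; lia.
Qed.

Lemma F_sum_mo l n u M m1 : strip l u -> strip n u -> l M = 0 ->
  \sum_(0 <= i < M.+1) mof l n u M.+1 m1 i + \sum_(0 <= i < M.+1) u i =
  \sum_(0 <= i < M.+1) l i + \sum_(0 <= i < M.+1) mmf n u M.+1 m1 i.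
Proof.
move=> sl sn lM.
set mm := mmf n u M.+1 m1.
set g := fun i => minn (l i) (mm i) - u i.
have e1 : \sum_(0 <= i < M.+1) mof l n u M.+1 m1 i =
   \sum_(0 <= i < M.+1) maxn (l i) (mm i) + \sum_(0 <= i < M) g i.
  rewrite /mof -/mm sumD; congr (_ + _).
  by rewrite big_nat_recl //= add0n.
have e2 : \sum_(0 <= i < M.+1) g i = \sum_(0 <= i < M) g i.
  by rewrite big_nat_recr //= /g lM min0n sub0n addn0.
have e3 : \sum_(0 <= i < M.+1) g i + \sum_(0 <= i < M.+1) u i =
   \sum_(0 <= i < M.+1) minn (l i) (mm i) + \sum_(0 <= i < M.+1) 0.
  apply: sum_rows => i _; rewrite /g; have [h1 _] := sl i; have [h3 _] := sn i.
  have := G_le M.+1 m1 h3; rewrite -/mm; lia.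
have e4 : \sum_(0 <= i < M.+1) maxn (l i) (mm i) + \sum_(0 <= i < M.+1) minn (l i) (mm i) =
   \sum_(0 <= i < M.+1) l i + \sum_(0 <= i < M.+1) mm i.
  by apply: sum_rows => i _; lia.
rewrite (@sum0 0 M.+1 (fun _ => 0)) // in e3.
lia.
Qed.

Lemma G_strips l n mo mm : strip mo l -> strip mo mm -> strip n mm ->
  (forall i i', mm i < n i -> l i' < mo i' -> mo i' <= mm i) ->
  [/\ strip l (gf l mo mm), strip n (gf l mo mm) & forall i, gf l mo mm i <= mm i].
Proof.
move=> s1 s2 s3 c3; split => [i|i|i]; rewrite /gf;
have [a1 a2] := s1 i; have [b1 b2] := s2 i; have [c1 c2] := s3 i;
have [a3 a4] := s1 i.+1; have [b3 b4] := s2 i.+1; have [c5 c6] := s3 i.+1; try lia.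
split; first by lia.
case: (ltnP (mm i.+1) (n i.+1)) => h; last by lia.
have h1 : mo i.+1 <= maxn (l i.+1) (mm i.+1).
  case: (ltnP (l i.+1) (mo i.+1)) => h2; last by lia.
  have := c3 _ _ h h2; lia.
have h2 : n i.+1 <= l i.
  rewrite leqNgt; apply/negP => h3.
  have := c3 _ _ h (leq_trans h3 (leq_trans c2 b1)); lia.
lia.
Qed.

Lemma G_sum l mo mm N : strip mo l -> strip mo mm ->
  (l 0 <> mo 0 -> mo 0 = mm 0) -> mo N = 0 ->
  \sum_(0 <= i < N) gf l mo mm i + \sum_(0 <= i < N) mo i =
  \sum_(0 <= i < N) mm i + \sum_(0 <= i < N) l i.
Proof.
move=> s1 s2 c2 moN.
set e := fun r => mo r - maxn (l r) (mm r).
have e1 : \sum_(0 <= i < N) gf l mo mm i + \sum_(0 <= i < N) e i.+1 =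
   \sum_(0 <= i < N) minn (mm i) (l i) + \sum_(0 <= i < N) 0.
  apply: sum_rows => i _; rewrite /gf /e;
  have [a1 a2] := s1 i; have [b1 b2] := s2 i; lia.
have e2 : \sum_(0 <= i < N) e i.+1 = \sum_(0 <= i < N) e i.
  have h1 : \sum_(0 <= i < N.+1) e i = e 0 + \sum_(0 <= i < N) e i.+1 by rewrite big_nat_recl.
  have h2 : \sum_(0 <= i < N.+1) e i = \sum_(0 <= i < N) e i + e N by rewrite big_nat_recr.
  have z0 : e 0 = 0 by rewrite /e; have [a1 _] := s1 0; have [b1 _] := s2 0; lia.
  have zN : e N = 0 by rewrite /e moN.
  by move: h1 h2; rewrite z0 zN add0n addn0 => ->.
have e3 : \sum_(0 <= i < N) e i + \sum_(0 <= i < N) maxn (l i) (mm i) =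
   \sum_(0 <= i < N) mo i + \sum_(0 <= i < N) 0.
  apply: sum_rows => i _; rewrite /e;
  have [a1 a2] := s1 i; have [b1 b2] := s2 i; lia.
have e4 : \sum_(0 <= i < N) minn (mm i) (l i) + \sum_(0 <= i < N) maxn (l i) (mm i) =
   \sum_(0 <= i < N) mm i + \sum_(0 <= i < N) l i.
  by apply: sum_rows => i _; lia.
rewrite (@sum0 0 N (fun _ => 0)) // in e1 e3.
lia.
Qed.

Lemma G_split l n mo mm : strip mo l -> strip mo mm -> strip n mm ->
  (forall i i', mm i < n i -> l i' < mo i' -> mo i' <= mm i) ->
  forall i i', mm i < n i -> gf l mo mm i' < mm i' -> mm i' <= mm i.
Proof.
move=> s1 s2 s3 c3 i i' hi hu.
have dm := strip_decr s3.
case: (leqP i i') => hii; first exact: dec_mono.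
case: (ltnP (l i') (mm i')) => hl.
  have [b1 _] := s2 i'; have := c3 _ _ hi (leq_trans hl b1); lia.
move: hu; rewrite /gf => hu.
have [a3 a4] := s1 i'.+1; have [b3 b4] := s2 i'.+1.
have h1 : l i'.+1 < mo i'.+1 by lia.
have := c3 _ _ hi h1; have := dec_mono dm hii; lia.
Qed.

Lemma FG l n mo mm N m1 : strip mo l -> strip mo mm -> strip n mm ->
  (l 0 <> mo 0 -> mo 0 = mm 0) ->
  (forall i i', mm i < n i -> l i' < mo i' -> mo i' <= mm i) ->
  \sum_(0 <= j < N) (mm j - gf l mo mm j) = m1 -> (forall j, N <= j -> n j = 0) ->
  (forall i, mmf n (gf l mo mm) N m1 i = mm i) /\
  (forall i, mof l n (gf l mo mm) N m1 i = mo i).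
Proof.
move=> s1 s2 s3 c2 c3 ht hz.
have [su1 su2 su3] := G_strips s1 s2 s3 c3.
have E : forall i, mmf n (gf l mo mm) N m1 i = mm i.
  apply: Uniq => //; first exact: strip_decl s3.
    by move=> i; rewrite su3 /=; have [] := s3 i.
  exact: G_split.
split => // i; rewrite /mof E.
case: i => [|r]; first by have [a1 _] := s1 0; have [b1 _] := s2 0; lia.
rewrite E /gf; have [a1 a2] := s1 r; have [b1 b2] := s2 r;
have [a3 a4] := s1 r.+1; have [b3 b4] := s2 r.+1; lia.
Qed.

Definition Nb (la nu : seq nat) := (size la + size nu).+1.
Definition Fpair la nu m1 mu :=
  (mkp (mof (part la) (part nu) (part mu) (Nb la nu) m1) (Nb la nu),
   mkp (mmf (part nu) (part mu) (Nb la nu) m1) (Nb la nu)).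
Definition Gseq la nu (p : seq nat * seq nat) :=
  mkp (gf (part la) (part p.1) (part p.2)) (Nb la nu).

Lemma strip_ext a b a' b' : (forall i, a i = a' i) -> (forall i, b i = b' i) ->
  strip a' b' -> strip a b.
Proof. by move=> ha hb h i; rewrite !ha !hb; apply: h. Qed.

Lemma size_le x N : is_partition x -> (forall j, N <= j -> part x j = 0) -> size x <= N.
Proof.
move=> px hz; have [_ hs] := partP px; rewrite leqNgt; apply/negP => h.
by move: h; rewrite hs hz.
Qed.

Lemma zero_la la nu j : size la + size nu <= j -> part la j = 0 /\ part nu j = 0.
Proof. by move=> h; rewrite !part_dflt //; lia. Qed.

Lemma sum_leq N (f g : nat -> nat) : (forall i, f i <= g i) ->
  \sum_(0 <= i < N) f i <= \sum_(0 <= i < N) g i.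
Proof. by move=> h; apply: sum_le => i _; apply: h. Qed.

Lemma mmf_ext n u u' N m1 i : (forall j, u j = u' j) -> mmf n u N m1 i = mmf n u' N m1 i.
Proof.
move=> h; rewrite /mmf /Ssum !(h i); congr (_ + minn _ (_ - _)).
by apply: eq_big_nat => j _; rewrite h.
Qed.

Lemma mof_ext l n u u' N m1 i : (forall j, u j = u' j) -> mof l n u N m1 i = mof l n u' N m1 i.
Proof.
move=> h; rewrite /mof (mmf_ext _ _ _ _ h); case: i => [|r] //.
by rewrite (mmf_ext _ _ _ _ h) (h r).
Qed.


Lemma Fok la nu k l m1 mu : is_partition la -> is_partition nu -> l + m1 <= k ->
  [/\ is_partition mu, sp_bumping la mu nu, skew_size la mu = l & skew_size nu mu = k - l] ->
  [/\ is_partition (Fpair la nu m1 mu).1 && is_partition (Fpair la nu m1 mu).2,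
      spo_bumping la (Fpair la nu m1 mu).1 (Fpair la nu m1 mu).2 nu,
      skew_size (Fpair la nu m1 mu).1 la = m1,
      skew_size (Fpair la nu m1 mu).1 (Fpair la nu m1 mu).2 = l &
      skew_size nu (Fpair la nu m1 mu).2 = k - l - m1]
  /\ (forall i, part (Fpair la nu m1 mu).1 i = mof (part la) (part nu) (part mu) (Nb la nu) m1 i)
  /\ (forall i, part (Fpair la nu m1 mu).2 i = mmf (part nu) (part mu) (Nb la nu) m1 i).
Proof.
move=> pla pnu hk [pmu [cl [cn [hl hn]]] sl0 sn0].
rewrite /Fpair /=.
set L := part la; set Nu := part nu; set u := part mu; set N := Nb la nu.
have sl : strip L u := (hsP pla pmu).1 hl.
have sn : strip Nu u := (hsP pnu pmu).1 hn.
have hz : forall j, N.-1 <= j -> L j = 0 /\ Nu j = 0 by move=> j; apply: zero_la.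
have hzn : forall j, N <= j -> Nu j = 0.
  by move=> j hj; have [] := hz j (leq_trans (leq_pred _) hj).
have [sm smol] := F_strips N m1 sl sn.
have smn := F_strip_n N m1 sn.
have [z1 z2] := F_zero m1 sl sn hz (leqnn N).
have [pmo hmo szmo] := mkpP (strip_decl sm) z1.
have [pmm hmm szmm] := mkpP (strip_decr sm) z2.
set mo := mkp _ N in pmo hmo szmo *; set mm := mkp _ N in pmm hmm szmm *.
have szla : size la <= N by rewrite /N /Nb; lia.
have sznu : size nu <= N by rewrite /N /Nb; lia.
have szmu : size mu <= N.
  apply: size_le => // j hj; have [h _] := hz j (leq_trans (leq_pred _) hj).
  by have := cl j; rewrite -/u -/L h leqn0 => /eqP.
have smo : strip (part mo) (part mm) by apply: strip_ext sm.
have smoL : strip (part mo) L by apply: strip_ext smol.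
have snm : strip Nu (part mm) by apply: strip_ext smn.
split; last by split.
rewrite /skew_size !(psizeE szla, psizeE sznu, psizeE szmu, psizeE szmo, psizeE szmm) in sl0 sn0 *.
have TuL : \sum_(0 <= i < N) part mu i <= \sum_(0 <= i < N) part la i.
  by apply: sum_leq => i; have [] := sl i.
have TuN : \sum_(0 <= i < N) part mu i <= \sum_(0 <= i < N) part nu i.
  by apply: sum_leq => i; have [] := sn i.
have hS : Ssum Nu u N 0 + \sum_(0 <= i < N) part mu i = \sum_(0 <= i < N) part nu i + \sum_(0 <= i < N) 0.
  by rewrite /Ssum; apply: sum_rows => i _; have [] := sn i; rewrite /Nu /u; lia.
rewrite (@sum0 0 N (fun _ => 0)) // addn0 in hS.
have hm : m1 <= Ssum Nu u N 0 by lia.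
have e1 := F_sum_mm sn hm.
have lM : L (size la + size nu) = 0 by have [] := hz (size la + size nu) (leqnn _).
have e2 := F_sum_mo m1 sl sn lM.
rewrite -[(size la + size nu).+1]/N in e2.
have E1 : \sum_(0 <= i < N) part mo i = \sum_(0 <= i < N) mof L Nu u N m1 i.
  by apply: eq_big_nat => i _; rewrite hmo.
have E2 : \sum_(0 <= i < N) part mm i = \sum_(0 <= i < N) mmf Nu u N m1 i.
  by apply: eq_big_nat => i _; rewrite hmm.
split.
- by rewrite pmo pmm.
- split; first by move=> i; have [] := smoL i.
  split; first by move=> i; have [] := smo i.
  split; first by move=> i; have [] := snm i.
  split; first by apply/hsP.
  split; first by apply/hsP.
  split; first by apply/hsP.
  split; first by rewrite hmo hmm; apply: F_cond2.
  move=> i j i' j'; rewrite /in_skew => /andP [h1 h2] /andP [h3 h4].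
  move: h1 h2 h3 h4; rewrite hmo hmm => h1 h2 h3 h4.
  have := F_cond3 (m1:=m1) sl sn hzn (leq_trans h1 h2) (leq_trans h3 h4).
  lia.
- move: E1 E2 e1 e2 sl0 sn0 TuL TuN hS hm; rewrite /L /Nu /u; lia.
- move: E1 E2 e1 e2 sl0 sn0 TuL TuN hS hm; rewrite /L /Nu /u; lia.
- move: E1 E2 e1 e2 sl0 sn0 TuL TuN hS hm; rewrite /L /Nu /u; lia.
Qed.

Lemma Gok la nu k l m1 p : is_partition la -> is_partition nu -> l + m1 <= k ->
  [/\ is_partition p.1 && is_partition p.2, spo_bumping la p.1 p.2 nu,
      skew_size p.1 la = m1, skew_size p.1 p.2 = l & skew_size nu p.2 = k - l - m1] ->
  [/\ is_partition (Gseq la nu p), sp_bumping la (Gseq la nu p) nu,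
      skew_size la (Gseq la nu p) = l & skew_size nu (Gseq la nu p) = k - l]
  /\ (forall i, part (Gseq la nu p) i = gf (part la) (part p.1) (part p.2) i)
  /\ (forall i, mmf (part nu) (part (Gseq la nu p)) (Nb la nu) m1 i = part p.2 i)
  /\ (forall i, mof (part la) (part nu) (part (Gseq la nu p)) (Nb la nu) m1 i = part p.1 i).
Proof.
case: p => mo mm /= pla pnu hk [/andP [pmo pmm] [cl [cm [cn [hl [hm [hn [c2 c3]]]]]]] sz1 sz2 sz3].
rewrite /Gseq /=.
set L := part la; set Nu := part nu; set N := Nb la nu.
have s1 : strip (part mo) L := (hsP pmo pla).1 hl.
have s2 : strip (part mo) (part mm) := (hsP pmo pmm).1 hm.
have s3 : strip Nu (part mm) := (hsP pnu pmm).1 hn.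
have c3' : forall i i', part mm i < Nu i -> L i' < part mo i' -> part mo i' <= part mm i.
  move=> i i' h1 h2; have := c3 i (part mm i).+1 i' (part mo i').
  by rewrite /in_skew ltnSn h1 h2 leqnn => /(_ isT isT).
have [su1 su2 su3] := G_strips s1 s2 s3 c3'.
have hz : forall j, N.-1 <= j -> L j = 0 /\ Nu j = 0 by move=> j; apply: zero_la.
have moz : forall j, N <= j -> part mo j = 0.
  case=> [//|j] hj; have [_ h] := s1 j; have [h2 _] := hz j ltac:(rewrite /N /Nb in hj *; simpl; lia).
  by move: h; rewrite h2 leqn0 => /eqP.
have gz : gf L (part mo) (part mm) N = 0.
  by have [h _] := su1 N; have [h2 _] := hz N (leq_pred _); move: h; rewrite h2 leqn0 => /eqP.
have [pmu hg szg] := mkpP (strip_decr su1) gz.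
set g := mkp _ N in pmu hg szg *.
have szla : size la <= N by rewrite /N /Nb; lia.
have sznu : size nu <= N by rewrite /N /Nb; lia.
have szmo : size mo <= N by apply: size_le.
have szmm : size mm <= N.
  apply: size_le => // j hj; have [h _] := s2 j; move: h; rewrite moz // leqn0 => /eqP //.
have Gs := G_sum (N:=N) s1 s2 c2 (moz N (leqnn _)).
have TLmo : \sum_(0 <= i < N) L i <= \sum_(0 <= i < N) part mo i.
  by apply: sum_leq => i; have [] := s1 i.
have Tmmmo : \sum_(0 <= i < N) part mm i <= \sum_(0 <= i < N) part mo i.
  by apply: sum_leq => i; have [] := s2 i.
have TmmN : \sum_(0 <= i < N) part mm i <= \sum_(0 <= i < N) Nu i.
  by apply: sum_leq => i; have [] := s3 i.
have Eg : \sum_(0 <= i < N) part g i = \sum_(0 <= i < N) gf L (part mo) (part mm) i.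
  by apply: eq_big_nat => i _; rewrite hg.
have Ed : \sum_(0 <= i < N) (part mm i - gf L (part mo) (part mm) i) +
    \sum_(0 <= i < N) gf L (part mo) (part mm) i =
    \sum_(0 <= i < N) part mm i + \sum_(0 <= i < N) 0.
  by apply: sum_rows => i _; have := su3 i; lia.
rewrite (@sum0 0 N (fun _ => 0)) // addn0 in Ed.
rewrite /skew_size !(psizeE szla, psizeE sznu, psizeE szmo, psizeE szmm) in sz1 sz2 sz3.
rewrite -/L -/Nu in sz1 sz2 sz3.
have Hd : \sum_(0 <= i < N) (part mm i - gf L (part mo) (part mm) i) = m1 by lia.
have hzn : forall j, N <= j -> Nu j = 0.
  by move=> j hj; have [] := hz j (leq_trans (leq_pred _) hj).
have [F1 F2] := FG s1 s2 s3 c2 c3' Hd hzn.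
split; last first.
  split; first exact: hg.
  by split => i; [rewrite (mmf_ext _ _ _ _ hg) | rewrite (mof_ext _ _ _ _ _ hg)].
have sgL : strip L (part g) by apply: strip_ext su1.
have sgN : strip Nu (part g) by apply: strip_ext su2.
split => //.
- split; first by move=> i; have [] := sgL i.
  split; first by move=> i; have [] := sgN i.
  by split; apply/hsP.
- rewrite /skew_size !(psizeE szla, psizeE szg); move: Eg Gs sz1 sz2 sz3 TLmo Tmmmo TmmN Ed.
  rewrite /L; lia.
- rewrite /skew_size !(psizeE sznu, psizeE szg); move: Eg Gs sz1 sz2 sz3 TLmo Tmmmo TmmN Ed.
  rewrite /L /Nu; lia.
Qed.

Lemma sig_eq T (P : T -> Prop) (a b : {x | P x}) : sval a = sval b -> a = b.
Proof.
case: a => a Ha; case: b => b Hb /= e; subst b; f_equal; apply: proof_irrelevance.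
Qed.

Theorem mainTheorem9 (la nu : seq nat) (k l m1 : nat) :
  is_partition la -> is_partition nu -> l + m1 <= k ->
  let m2 := k - l - m1 in
  exists f : {mu : seq nat | [/\ is_partition mu, sp_bumping la mu nu,
                                 skew_size la mu = l & skew_size nu mu = k - l]} ->
             {p : seq nat * seq nat |
                [/\ is_partition p.1 && is_partition p.2,
                    spo_bumping la p.1 p.2 nu,
                    skew_size p.1 la = m1,
                    skew_size p.1 p.2 = l & skew_size nu p.2 = m2]},
    bijective f.
Proof.
move=> pla pnu hk m2.
exists (fun x => exist _ (Fpair la nu m1 (sval x)) (Fok pla pnu hk (svalP x)).1).
exists (fun y => exist _ (Gseq la nu (sval y)) (Gok pla pnu hk (svalP y)).1).
- case=> mu H; apply: sig_eq => /=.
  have [H1 [H2 H3]] := Fok pla pnu hk H.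
  have [[pg _ _ _] [G1 _]] := Gok pla pnu hk H1.
  case: H => pmu [_ [_ [hl hn]]] _ _.
  apply: part_eq => // i; rewrite G1 /gf !H2 !H3; apply: GF.
    exact: (hsP pla pmu).1 hl.
  exact: (hsP pnu pmu).1 hn.
- case=> [[mo mm] H]; apply: sig_eq => /=.
  have [H1 [G1 [G2 G3]]] := Gok pla pnu hk H.
  have [[pp _ _ _ _] [F1 F2]] := Fok pla pnu hk H1.
  case: H => /andP [pmo pmm] _ _ _ _; move: pp F1 F2 G1 G2 G3 => /= /andP [pa pb] F1 F2 G1 G2 G3.
  congr (_, _); apply: part_eq => // i; [by rewrite F1 G3 | by rewrite F2 G2].
Qed.
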